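(* Let $X=(X^{(1)},\dots,X^{(p)})\in\mathbb{R}^p$ be a random vector with finite second moments and strictly positive definite covariance matrix $\Sigma_X$, let $\epsilon$ be a random variable with $E(\epsilon)=0$, $\mathrm{var}(\epsilon)=\sigma^2>0$, uncorrelated with $X^{(1)},\dots,X^{(p)}$, and let $Y=\delta+\sum_{j=1}^p\beta_jX^{(j)}+\epsilon$ with $\delta\in\mathbb{R}$, $\beta\in\mathbb{R}^p$. Suppose the distribution of $(X,Y)$ is partially faithful. Then for every $j\in\{1,\dots,p\}$: $\rho(Y,X^{(j)}\mid X^{(\mathcal{S})})\neq 0$ for all $\mathcal{S}\subseteq\{j\}^C$ if and only if $\beta_j\neq 0$.
   Context: $\rho(Z^{(1)},Z^{(2)}\mid W)$ denotes the population partial correlation of $Z^{(1)},Z^{(2)}$ given the collection $W$. For $\mathcal{S}\subseteq\{1,\dots,p\}$, $X^{(\mathcal{S})}=\{X^{(j)};j\in\mathcal{S}\}$ and $\{j\}^C=\{1,\dots,p\}\setminus\{j\}$. The distribution of $(X,Y)$ is partially faithful if for every $j$: if $\rho(Y,X^{(j)}\mid X^{(\mathcal{S})})=0$ for some $\mathcal{S}\subseteq\{j\}^C$, then $\rho(Y,X^{(j)}\mid X^{(\{j\}^C)})=0$. *)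

(* Defs.v *)
From HB Require Import structures.
From mathcomp Require Import all_boot all_order all_algebra.
From mathcomp Require Import all_classical all_reals all_analysis.
Set Implicit Arguments. Unset Strict Implicit. Unset Printing Implicit Defensive.
Import Order.TTheory GRing.Theory Num.Theory.
Local Open Scope ring_scope.

Section PartialCorrelation.
Context {d : measure_display} {T : measurableType d} {R : realType}
  (P : probability T R).

(* real-valued covariance (finite for L^2 variables) *)
Definition cov (U V : T -> R) : R := fine (covariance P U V).

Definition covmx (n : nat) (Z : 'I_n -> T -> R) : 'M[R]_n :=
  \matrix_(i, j) cov (Z i) (Z j).

Definition covrow (k : nat) (U : T -> R) (W : 'I_k -> T -> R) : 'rV[R]_k :=
  \row_i cov U (W i).

Definition pcov (k : nat) (U V : T -> R) (W : 'I_k -> T -> R) : R :=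
  cov U V - (covrow U W *m invmx (covmx W) *m (covrow V W)^T) 0 0.

Definition pcor (k : nat) (U V : T -> R) (W : 'I_k -> T -> R) : R :=
  pcov U V W / Num.sqrt (pcov U U W * pcov V V W).

(* the sub-collection X^(S) = {X^(j); j in S}, enumerated in increasing order *)
Definition subfam (p : nat) (X : 'I_p -> T -> R) (S : {set 'I_p})
  : 'I_#|S| -> T -> R := fun i => X (enum_val i).
Arguments subfam {p} X S _.

Definition pcorS (p : nat) (Y : T -> R) (X : 'I_p -> T -> R) (j : 'I_p)
  (S : {set 'I_p}) : R := pcor Y (X j) (subfam X S).

Definition partially_faithful (p : nat) (X : 'I_p -> T -> R) (Y : T -> R) :=
  forall j : 'I_p,
    (exists S : {set 'I_p}, S \subset [set~ j] /\ pcorS Y X j S = 0) ->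
    pcorS Y X j [set~ j] = 0.

Definition posdef (n : nat) (A : 'M[R]_n) :=
  forall v : 'rV[R]_n, v != 0 -> 0 < (v *m A *m v^T) 0 0.

End PartialCorrelation.

(* Main.v *)
Require Import Defs.
From HB Require Import structures.
From mathcomp Require Import all_boot all_order all_algebra.
From mathcomp Require Import all_classical all_reals all_analysis.
From mathcomp Require Import lra.
Import Order.TTheory GRing.Theory Num.Theory.
Local Open Scope ring_scope.
Section S.
Context (d : measure_display) (T : measurableType d) (R : realType) (P : probability T R).
Lemma h12 : (1 <= (2%:E : \bar R))%E. Proof. by rewrite lee_fin ler1n. Qed.
Hint Resolve h12 : core.
Lemma cov_fin (U V : T -> R) : U \in Lfun P 2%:E -> V \in Lfun P 2%:E ->
  covariance P U V \is a fin_num.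
Proof.
move=> U2 V2.
have Pfin : P setT \is a fin_num := fin_num_measure P _ measurableT.
apply: covariance_fin_num; [exact: Lfun_subset12|exact: Lfun_subset12|exact: Lfun2_mul_Lfun1].
Qed.
Lemma covDl (U V Z : T -> R) : U \in Lfun P 2%:E -> V \in Lfun P 2%:E -> Z \in Lfun P 2%:E ->
  cov P (U \+ V) Z = cov P U Z + cov P V Z.
Proof. by move=> *; rewrite /cov covarianceDl // fineD // cov_fin. Qed.
Lemma covZl a (U Z : T -> R) : U \in Lfun P 2%:E -> Z \in Lfun P 2%:E ->
  cov P (a \o* U) Z = a * cov P U Z.
Proof.
move=> U2 Z2.
have Pfin : P setT \is a fin_num := fin_num_measure P _ measurableT.
rewrite /cov covarianceZl; [|exact: Lfun_subset12|exact: Lfun_subset12|exact: Lfun2_mul_Lfun1].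
by rewrite fineM // cov_fin.
Qed.
Lemma covC (U V : T -> R) : cov P U V = cov P V U.
Proof. by rewrite /cov covarianceC. Qed.
Lemma cov_cstl c (Z : T -> R) : cov P (cst c) Z = 0.
Proof. by rewrite /cov covariance_cst_l. Qed.
Lemma cov_sum (I : Type) (r : seq I) (F : I -> T -> R) (Z : T -> R) :
  (forall i, F i \in Lfun P 2%:E) -> Z \in Lfun P 2%:E ->
  cov P (\sum_(i <- r) F i) Z = \sum_(i <- r) cov P (F i) Z.
Proof.
move=> F2 Z2; elim: r => [|i r IH].
  by rewrite !big_nil -(cov_cstl 0 Z).
rewrite !big_cons -IH -covDl //; apply: rpred_sum => ? _; exact: F2.
Qed.
End S.
Lemma mxE_sub (R : ringType) m n (A B : 'M[R]_(m,n)) i j : (A - B) i j = A i j - B i j.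
Proof. by rewrite !mxE. Qed.
Section Mx.
Variable R : realType.

Lemma posdef_unit n (A : 'M[R]_n) : posdef A -> A \in unitmx.
Proof.
move=> hA; rewrite -row_free_unit -kermx_eq0; apply/negPn/negP => hK.
have [i hi] : exists i, row i (kermx A) != 0.
  apply/not_existsP => /= hall; move/eqP: hK; apply.
  apply/row_matrixP => i; rewrite row0; apply/eqP/negPn/negP => h; exact: (hall i).
have := hA _ hi; rewrite -row_mul mulmx_ker row0 mul0mx mxE ltxx //.
Qed.

Variables (n k : nat) (S : 'M[R]_n) (E : 'M[R]_(k, n)) (j : 'I_n).
Hypotheses (hEE : E *m E^T = 1%:M) (hS : S^T = S) (hpos : posdef S).
Let ej : 'rV[R]_n := delta_mx 0 j.
Hypotheses (hEj : E *m ej^T = 0)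
  (hu : forall u : 'rV[R]_n, u 0 j = 0 -> u *m E^T *m E = u).
Let G := E *m S *m E^T.
Let Gi := invmx G.
Let M := S - S *m E^T *m Gi *m E *m S.

Lemma G_unit : G \in unitmx.
Proof.
apply: posdef_unit => v hv.
have hvE : v *m E != 0.
  apply: contra hv => /eqP h; by rewrite -(mulmx1 v) -hEE mulmxA h mul0mx.
have := hpos _ hvE; by rewrite /G trmx_mul !mulmxA.
Qed.

Lemma EM : E *m M = 0.
Proof.
rewrite /M mulmxBr !mulmxA -[E *m S *m E^T]/G.
by rewrite /Gi mulmxV ?G_unit // mul1mx subrr.
Qed.

Lemma ME : M *m E^T = 0.
Proof.
rewrite /M mulmxBl.
have -> : S *m E^T *m Gi *m E *m S *m E^T = S *m E^T *m (Gi *m G) by rewrite /G !mulmxA.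
by rewrite /Gi mulVmx ?G_unit // mulmx1 subrr.
Qed.

Lemma Lgen (x y : 'rV[R]_n) :
  (x *m S *m y^T) 0 0 - (x *m S *m E^T *m Gi *m (y *m S *m E^T)^T) 0 0
  = (x *m M *m y^T) 0 0.
Proof.
by rewrite -mxE_sub /M mulmxBr mulmxBl !trmx_mul trmxK hS !mulmxA.
Qed.

Let q := (ej *m M *m ej^T) 0 0.

Lemma q_pos : 0 < q.
Proof.
pose v := ej - ej *m S *m E^T *m Gi *m E.
have vSE : v *m S *m E^T = 0.
  rewrite /v mulmxBl mulmxBl.
  have -> : ej *m S *m E^T *m Gi *m E *m S *m E^T = ej *m S *m E^T *m (Gi *m G) by rewrite /G !mulmxA.
  by rewrite /Gi mulVmx ?G_unit // mulmx1 subrr.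
have vq : v *m S *m v^T = ej *m M *m ej^T.
  rewrite {2}/v raddfB /= mulmxBr.
  have -> : v *m S *m (ej *m S *m E^T *m Gi *m E)^T = v *m S *m E^T *m (ej *m S *m E^T *m Gi)^T.
    by rewrite trmx_mul mulmxA.
  rewrite vSE mul0mx subr0 /v /M mulmxBl mulmxBl mulmxBr mulmxBl.
  by rewrite !mulmxA.
have hv : v != 0.
  apply/negP => /eqP hv0.
  have : v *m ej^T = ej *m ej^T by rewrite /v mulmxBl -(mulmxA _ E) hEj mulmx0 subr0.
  rewrite hv0 mul0mx /ej trmx_delta mul_delta_mx => /matrixP /(_ 0 0).
  by rewrite !mxE /= => /eqP; rewrite eq_sym oner_eq0.
by have := hpos _ hv; rewrite vq.
Qed.

Variable b : 'rV[R]_n.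
Let u := b - b 0 j *: ej.
Lemma u0 : u 0 j = 0.
Proof. by rewrite /u !mxE !eqxx /= mulr1 subrr. Qed.
Lemma uM : u *m M = 0.
Proof. by rewrite -(hu _ u0) -mulmxA EM mulmx0. Qed.
Lemma Mu : M *m u^T = 0.
Proof. by rewrite -(hu _ u0) trmx_mul mulmxA ME mul0mx. Qed.
Lemma bdec : b = b 0 j *: ej + u.
Proof. by rewrite /u addrC subrK. Qed.

Lemma bM : b *m M = b 0 j *: (ej *m M).
Proof.
have hb := bdec; set β := b 0 j in hb *.
by rewrite {1}hb mulmxDl uM addr0 -scalemxAl.
Qed.
Lemma LYX : (b *m M *m ej^T) 0 0 = b 0 j * q.
Proof. by rewrite bM -scalemxAl mxE. Qed.
Lemma LYY : (b *m M *m b^T) 0 0 = b 0 j ^+ 2 * q.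
Proof.
have h : (ej *m M *m b^T) 0 0 = b 0 j * q.
  have hb := bdec; set β := b 0 j in hb *.
  rewrite {1}hb [(_ + _)^T]raddfD /= mulmxDr -!(mulmxA ej M) Mu mulmx0 addr0.
  by rewrite mulmxA linearZ /= -scalemxAr mxE.
by rewrite bM -scalemxAl mxE h mulrA expr2.
Qed.
Lemma core :
  exists q, 0 < q /\
  (b *m S *m ej^T) 0 0 - (b *m S *m E^T *m invmx (E *m S *m E^T) *m (ej *m S *m E^T)^T) 0 0 = b 0 j * q /\
  (b *m S *m b^T) 0 0 - (b *m S *m E^T *m invmx (E *m S *m E^T) *m (b *m S *m E^T)^T) 0 0 = b 0 j ^+ 2 * q /\
  (ej *m S *m ej^T) 0 0 - (ej *m S *m E^T *m invmx (E *m S *m E^T) *m (ej *m S *m E^T)^T) 0 0 = q.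
Proof.
exists q; split; first exact: q_pos.
by rewrite !Lgen LYX LYY.
Qed.
End Mx.

Section Conc.
Variables (R : realType) (p : nat) (j : 'I_p).
Let Sc := [set~ j].
Definition Emx : 'M[R]_(#|Sc|, p) := \matrix_(i, m) (enum_val i == m)%:R.

Lemma mulE c (A : 'M[R]_(p, c)) i m : (Emx *m A) i m = A (enum_val i) m.
Proof.
rewrite mxE (bigD1 (enum_val i)) //= mxE eqxx mul1r big1 ?addr0 // => m' hm.
by rewrite mxE eq_sym (negbTE hm) mul0r.
Qed.

Lemma mulET c (A : 'M[R]_(c, p)) i m : (A *m Emx^T) i m = A i (enum_val m).
Proof. by rewrite -[A *m Emx^T]trmxK trmx_mul trmxK mxE mulE mxE. Qed.

Lemma hEE : Emx *m Emx^T = 1%:M.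
Proof.
apply/matrixP => i i'; rewrite mulE !mxE (inj_eq enum_val_inj) eq_sym //.
Qed.

Lemma evj (i : 'I_#|Sc|) : (enum_val i == j) = false.
Proof.
apply/negbTE; have := enum_valP i; by rewrite /Sc in_setC1.
Qed.

Lemma hEj : Emx *m (delta_mx 0 j : 'rV[R]_p)^T = 0.
Proof. by apply/matrixP => i z; rewrite mulE !mxE evj andbF. Qed.

Lemma hu (u : 'rV[R]_p) : u 0 j = 0 -> u *m Emx^T *m Emx = u.
Proof.
move=> u0; apply/rowP => m; rewrite mxE.
under eq_bigr => i _ do rewrite mulET mxE.
case: (eqVneq m j) => [->|hm].
  by rewrite u0 big1 // => i _; rewrite evj mulr0.
have mS : m \in Sc by rewrite /Sc in_setC1.
rewrite (bigD1 (enum_rank_in mS m)) //= enum_rankK_in // eqxx mulr1.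
rewrite big1 ?addr0 // => i hi; case: (eqVneq (enum_val i) m) => h; last by rewrite mulr0.
have hi' : i = enum_rank_in mS m by apply: enum_val_inj; rewrite enum_rankK_in.
by rewrite hi' eqxx in hi.
Qed.
End Conc.

Lemma delta_mul (R : realType) p c (j : 'I_p) (A : 'M[R]_(p, c)) m :
  ((delta_mx 0 j : 'rV[R]_p) *m A) 0 m = A j m.
Proof.
rewrite mxE (bigD1 j) //= mxE !eqxx mul1r big1 ?addr0 // => i hi.
by rewrite mxE (negbTE hi) andbF mul0r.
Qed.

Lemma mul_deltaT (R : realType) p c (j : 'I_p) (A : 'M[R]_(c, p)) m :
  (A *m (delta_mx 0 j : 'rV[R]_p)^T) m 0 = A m j.
Proof.
by rewrite -[A *m _]trmxK trmx_mul trmxK mxE delta_mul mxE.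
Qed.

Theorem corollary1 (d : measure_display) (T : measurableType d) (R : realType)
  (P : probability T R) (p : nat) (X : 'I_p -> T -> R) (eps : T -> R)
  (delta : R) (beta : 'I_p -> R) (sigma2 : R) :
  (forall j, X j \in Lfun P 2%:E) ->
  posdef (covmx P X) ->
  eps \in Lfun P 2%:E ->
  ('E_P[eps] = 0)%E ->
  0 < sigma2 -> 'V_P[eps] = sigma2%:E ->
  (forall j, covariance P (X j) eps = 0%E) ->
  let Y := fun w => delta + \sum_(j < p) beta j * X j w + eps w in
  partially_faithful P X Y ->
  forall j : 'I_p,
    (forall S : {set 'I_p}, S \subset [set~ j] -> pcorS P Y X j S != 0)
    <-> beta j != 0.
Proof.
move=> X2 hpd eps2 Eeps s2pos Veps covXe Y pf j.
have h12R := @h12 R.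
set Sig := covmx P X.
have hS : Sig^T = Sig by apply/matrixP => a c; rewrite !mxE covC.
pose b : 'rV[R]_p := \row_i beta i.
pose ej : 'rV[R]_p := delta_mx 0 j.
have eY : Y = (cst delta \+ \sum_(i < p) (beta i \o* X i)) \+ eps.
  apply/funext => w; rewrite /Y /= fct_sumE; congr (_ + _ + _); by apply: eq_bigr => i _; rewrite /= mulrC.
have sum2 : \sum_(i < p) (beta i \o* X i) \in Lfun P 2%:E.
  by apply: rpred_sum => i _; apply: Lfun_scale => //; rewrite ler1n.
have Y2 : Y \in Lfun P 2%:E.
  by rewrite eY; apply: rpredD => //; apply: rpredD => //; exact: Lfun_cst.
have covY : forall Z, Z \in Lfun P 2%:E ->
    cov P Y Z = \sum_(i < p) beta i * cov P (X i) Z + cov P eps Z.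
  move=> Z Z2; rewrite eY covDl //; last by apply: rpredD => //; exact: Lfun_cst.
  rewrite covDl //; last exact: Lfun_cst.
  rewrite cov_cstl add0r cov_sum //; last by move=> i; apply: Lfun_scale => //; rewrite ler1n.
  by congr (_ + _); apply: eq_bigr => i _; rewrite covZl.
have ceX : forall m, cov P eps (X m) = 0.
  by move=> m; rewrite covC /cov covXe.
have covYX : forall m, cov P Y (X m) = (b *m Sig) 0 m.
  move=> m; rewrite covY // ceX addr0 mxE; apply: eq_bigr => i _; by rewrite !mxE.
have cee : cov P eps eps = sigma2.
  by rewrite /cov -[covariance P eps eps]/('V_P[eps]) Veps.
have covYY : cov P Y Y = (b *m Sig *m b^T) 0 0 + sigma2.
  have cYe : cov P eps Y = sigma2.
    rewrite covC covY // big1 ?add0r // => i _; by rewrite /cov covXe mulr0.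
  rewrite covY // cYe mxE; congr (_ + _); apply: eq_bigr => i _.
  by rewrite covC covYX !mxE mulrC.
pose Sc := [set~ j].
have ecovmx : covmx P (@subfam _ _ _ _ X Sc) = Emx R p j *m Sig *m (Emx R p j)^T.
  by apply/matrixP => a c; rewrite mulET mulE !mxE.
have ecovrow : forall U, covrow P U (@subfam _ _ _ _ X Sc) = (\row_m cov P U (X m)) *m (Emx R p j)^T.
  by move=> U; apply/rowP => a; rewrite mulET !mxE.
have rowY : \row_m cov P Y (X m) = b *m Sig by apply/rowP => m; rewrite mxE covYX.
have rowX : \row_m cov P (X j) (X m) = ej *m Sig.
  by apply/rowP => m; rewrite mxE delta_mul mxE.
have [q [qpos [h1 [h2 h3]]]] := @core R p _ Sig (Emx R p j) j (hEE R p j) hS hpd (hEj R p j) (@hu R p j) b.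
have bj : b 0 j = beta j by rewrite mxE.
rewrite bj in h1 h2.
have pYX : pcov P Y (X j) (@subfam _ _ _ _ X Sc) = beta j * q.
  by rewrite /pcov ecovmx !ecovrow rowY rowX covYX -h1 mul_deltaT.
have pYY : pcov P Y Y (@subfam _ _ _ _ X Sc) = beta j ^+ 2 * q + sigma2.
  by rewrite /pcov ecovmx !ecovrow rowY covYY addrAC h2.
have cXX : cov P (X j) (X j) = (ej *m Sig *m ej^T) 0 0.
  by rewrite mul_deltaT delta_mul /Sig mxE.
have pXX : pcov P (X j) (X j) (@subfam _ _ _ _ X Sc) = q.
  by rewrite /pcov ecovmx !ecovrow rowX cXX -h3.
have ep : pcorS P Y X j Sc = beta j * q / Num.sqrt ((beta j ^+ 2 * q + sigma2) * q).
  by rewrite /pcorS /pcor pYX pYY pXX.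
have Dpos : 0 < Num.sqrt ((beta j ^+ 2 * q + sigma2) * q).
  rewrite sqrtr_gt0; apply: mulr_gt0 => //.
  have : 0 <= beta j ^+ 2 * q by apply: mulr_ge0 => //; [exact: sqr_ge0 | exact: ltW].
  lra.
split.
  move=> hall; apply/negP => /eqP hb0.
  have := hall Sc (subxx _); by rewrite ep hb0 !mul0r eqxx.
move=> hb S hSsub; apply/eqP => h0.
have := pf j (ex_intro _ S (conj hSsub h0)); rewrite -/Sc ep => /eqP.
rewrite mulf_eq0 invr_eq0 (gt_eqF Dpos) orbF mulf_eq0 (gt_eqF qpos) orbF.
by rewrite (negbTE hb).
Qed.
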